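(* Let $n\ge2$ and let $u=x_0+h_1x_1+\cdots+h_{n-1}x_{n-1}$ be a polar $n$-complex number with $v_+>0$, with $v_->0$ if $n$ is even, and with $\rho_k>0$ for all $k=1,\dots,\lfloor(n-1)/2\rfloor$. Then $$u=\exp\Big[e_+\ln v_++e_-\ln v_-+\sum_{k=1}^{n/2-1}\big(e_k\ln\rho_k+\tilde e_k\phi_k\big)\Big]\quad(n\text{ even}),$$ $$u=\exp\Big[e_+\ln v_++\sum_{k=1}^{(n-1)/2}\big(e_k\ln\rho_k+\tilde e_k\phi_k\big)\Big]\quad(n\text{ odd}),$$ where $\exp w=\sum_{j\ge0}w^j/j!$. Equivalently, $u=\big(e_+v_++e_-v_-+\sum_{k}e_k\rho_k\big)\exp\big(\sum_k\tilde e_k\phi_k\big)$ (the $e_-$ term present only for even $n$).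
   Context: Polar $n$-complex numbers: $u=x_0+h_1x_1+\cdots+h_{n-1}x_{n-1}$, $x_j\in\mathbb{R}$, $h_0=1$, with componentwise addition and bilinear multiplication $h_jh_k=h_{(j+k)\bmod n}$. Canonical variables: $v_+=\sum_px_p$; for even $n$, $v_-=\sum_p(-1)^px_p$; for $k=1,\dots,\lfloor(n-1)/2\rfloor$, $v_k=\sum_px_p\cos(2\pi kp/n)$, $\tilde v_k=\sum_px_p\sin(2\pi kp/n)$, $\rho_k=\sqrt{v_k^2+\tilde v_k^2}$, and (for $\rho_k>0$) $\phi_k\in[0,2\pi)$ with $\cos\phi_k=v_k/\rho_k$, $\sin\phi_k=\tilde v_k/\rho_k$. Canonical base: $e_+=\frac1n\sum_{p=0}^{n-1}h_p$; for even $n$, $e_-=\frac1n\sum_{p=0}^{n-1}(-1)^ph_p$; $e_k=\frac2n\sum_{p=0}^{n-1}\cos(2\pi kp/n)h_p$, $\tilde e_k=\frac2n\sum_{p=0}^{n-1}\sin(2\pi kp/n)h_p$ for $k=1,\dots,\lfloor(n-1)/2\rfloor$. *)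

(* Defs.v *)
From HB Require Import structures.
From mathcomp Require Import all_boot all_order all_algebra.
From mathcomp Require Import all_classical all_reals all_analysis.
Set Implicit Arguments. Unset Strict Implicit. Unset Printing Implicit Defensive.
Import Order.TTheory GRing.Theory Num.Theory.
Import numFieldNormedType.Exports.
Local Open Scope ring_scope.
Local Open Scope classical_set_scope.

(* A polar n-complex number x_0 + h_1 x_1 + ... + h_{n-1} x_{n-1} is
   represented by its component function p |-> x_p on 'I_n. *)
Definition ncplx (R : realType) (n : nat) := 'I_n -> R.

Section PolarNComplex.
Variables (R : realType) (n : nat).

Definition ncadd (u v : ncplx R n) : ncplx R n := fun p => u p + v p.
Definition ncscale (a : R) (u : ncplx R n) : ncplx R n := fun p => a * u p.
Definition nczero : ncplx R n := fun _ => 0.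
Definition ncone : ncplx R n := fun p => if val p == 0%N then 1 else 0.
(* bilinear multiplication with h_j h_k = h_{(j+k) mod n} *)
Definition ncmul (u v : ncplx R n) : ncplx R n :=
  fun m => \sum_(j < n) \sum_(k < n | ((j + k) %% n)%N == val m) u j * v k.
Definition ncpow (w : ncplx R n) (j : nat) : ncplx R n := iter j (ncmul w) ncone.
Definition ncsum (I : Type) (r : seq I) (F : I -> ncplx R n) : ncplx R n :=
  foldr (fun i acc => ncadd (F i) acc) nczero r.

(* "exp w = E": the series sum_j w^j / j! converges (componentwise) to E *)
Definition ncexp_is (w E : ncplx R n) : Prop :=
  forall p : 'I_n,
    (fun N : nat => \sum_(j < N) ncpow w j p / (j`!)%:R) @ \oo --> E p.

Definition angle (k p : nat) : R := 2 * pi * k%:R * p%:R / n%:R.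

Definition vplus (u : ncplx R n) : R := \sum_(p < n) u p.
Definition vminus (u : ncplx R n) : R := \sum_(p < n) (-1) ^+ p * u p.
Definition vk (u : ncplx R n) (k : nat) : R := \sum_(p < n) u p * cos (angle k p).
Definition vtk (u : ncplx R n) (k : nat) : R := \sum_(p < n) u p * sin (angle k p).
Definition rhok (u : ncplx R n) (k : nat) : R := Num.sqrt (vk u k ^+ 2 + vtk u k ^+ 2).

Definition eplus : ncplx R n := fun p => 1 / n%:R.
Definition eminus : ncplx R n := fun p => (-1) ^+ p / n%:R.
Definition ek (k : nat) : ncplx R n := fun p => 2 / n%:R * cos (angle k p).
Definition etk (k : nat) : ncplx R n := fun p => 2 / n%:R * sin (angle k p).

(* k ranges over 1, ..., floor((n-1)/2)  (= n/2 - 1 for n even) *)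
Definition krange : seq nat := iota 1 (n.-1)./2.

Definition log_exponent (u : ncplx R n) (phi : nat -> R) : ncplx R n :=
  ncadd (ncscale (ln (vplus u)) eplus)
   (ncadd (if odd n then nczero else ncscale (ln (vminus u)) eminus)
     (ncsum krange (fun k => ncadd (ncscale (ln (rhok u k)) (ek k))
                                   (ncscale (phi k) (etk k))))).

Definition modulus_part (u : ncplx R n) : ncplx R n :=
  ncadd (ncscale (vplus u) eplus)
   (ncadd (if odd n then nczero else ncscale (vminus u) eminus)
     (ncsum krange (fun k => ncscale (rhok u k) (ek k)))).

Definition angle_exponent (phi : nat -> R) : ncplx R n :=
  ncsum krange (fun k => ncscale (phi k) (etk k)).

End PolarNComplex.

(* Main.v *)
Require Import Defs.
From HB Require Import structures.
From mathcomp Require Import all_boot all_order all_algebra.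
From mathcomp Require Import all_classical all_reals all_analysis.
From mathcomp Require Import complex.
From mathcomp Require Import ring lra zify.
Import Order.TTheory GRing.Theory Num.Theory.
Import numFieldNormedType.Exports.
Set Implicit Arguments. Unset Strict Implicit. Unset Printing Implicit Defensive.
Local Open Scope ring_scope.
Local Open Scope complex_scope.
Local Open Scope classical_set_scope.

(* MathComp-Analysis over R : realType; complex numbers R[i]
   from mathcomp-real-closed.  Proof via the discrete Fourier characters
   chi_k(u) = sum_p u_p om^(k p), which are multiplicative. *)
Definition Tg (K : fieldType) (z : K) (N : nat) : K := \sum_(j < N) z ^+ j / (j`!)%:R.

Section EE.
Variable R : realType.
Local Notation C := R[i].

Definition ee (x : R) : C := (cos x) +i* (sin x).

Lemma complex_eq (x y : C) : complex.Re x = complex.Re y -> complex.Im x = complex.Im y -> x = y.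
Proof. by case: x => a b; case: y => c d /= -> ->. Qed.

Lemma ReM (x y : C) : complex.Re (x * y) = complex.Re x * complex.Re y - complex.Im x * complex.Im y.
Proof. by case: x => a b; case: y => c d. Qed.
Lemma ImM (x y : C) : complex.Im (x * y) = complex.Re x * complex.Im y + complex.Im x * complex.Re y.
Proof. by case: x => a b; case: y => c d. Qed.
Lemma ReD (x y : C) : complex.Re (x + y) = complex.Re x + complex.Re y.
Proof. by case: x => a b; case: y => c d. Qed.
Lemma ImD (x y : C) : complex.Im (x + y) = complex.Im x + complex.Im y.
Proof. by case: x => a b; case: y => c d. Qed.
Lemma ReC (a : R) : complex.Re (a%:C) = a. Proof. by []. Qed.
Lemma ImC (a : R) : complex.Im (a%:C) = 0. Proof. by []. Qed.
Lemma Re_i : complex.Re ('i : C) = 0. Proof. by []. Qed.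
Lemma Im_i : complex.Im ('i : C) = 1. Proof. by []. Qed.
Lemma Re0 : complex.Re (0 : C) = 0. Proof. by []. Qed.
Lemma Im0 : complex.Im (0 : C) = 0. Proof. by []. Qed.
Lemma Re1 : complex.Re (1 : C) = 1. Proof. by []. Qed.
Lemma Im1 : complex.Im (1 : C) = 0. Proof. by []. Qed.

Lemma Re_sum (I : Type) (r : seq I) (P : pred I) (f : I -> C) :
  complex.Re (\sum_(i <- r | P i) f i) = \sum_(i <- r | P i) complex.Re (f i).
Proof. by apply: (big_morph _ ReD Re0). Qed.
Lemma Im_sum (I : Type) (r : seq I) (P : pred I) (f : I -> C) :
  complex.Im (\sum_(i <- r | P i) f i) = \sum_(i <- r | P i) complex.Im (f i).
Proof. by apply: (big_morph _ ImD Im0). Qed.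

Lemma eeD x y : ee (x + y) = ee x * ee y.
Proof. by apply: complex_eq; rewrite ?ReM ?ImM /= ?cosD ?sinD //; ring. Qed.

Lemma ee0 : ee 0 = 1.
Proof. by rewrite /ee cos0 sin0. Qed.

Lemma eeX x m : ee x ^+ m = ee (m%:R * x).
Proof.
elim: m => [|m IH]; first by rewrite expr0 mul0r ee0.
by rewrite exprS IH -eeD -{1}(mul1r x) -mulrDl addrC -natr1.
Qed.

Lemma ee_conjM x : (ee x)^* * ee x = 1.
Proof.
apply: complex_eq; rewrite ?ReM ?ImM /=; last by ring.
have := cos2Dsin2 x; rewrite !expr2 => h; rewrite -h; ring.
Qed.

Lemma ee2pi : ee (pi *+ 2) = 1.
Proof. by rewrite /ee cos2pi sin2pi. Qed.

Lemma ee_neq1 x : 0 < x < pi *+ 2 -> ee x != 1.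
Proof.
move=> /andP[x0 x2]; apply/negP => /eqP/(congr1 (@complex.Re R)) /=.
have hx : x = (x / 2) *+ 2 by rewrite -mulr_natr divfK.
rewrite hx cos_mulr2n cos2sin2.
have : 0 < sin (x / 2).
  apply: sin_gt0_pi; apply/andP; split; first by rewrite divr_gt0.
  by rewrite ltr_pdivrMr // mulr_natr.
move=> h e.
have : sin (x / 2) ^+ 2 = 0 by move: e; lra.
by move/eqP; rewrite sqrf_eq0 gt_eqF.
Qed.

End EE.
Section DFT.
Variable R : realType.
Variable n : nat.
Hypothesis n_gt0 : (0 < n)%N.
Local Notation C := R[i].

Definition om : C := ee (2 * pi / n%:R).

Lemma n_neq0 : (n%:R : R) != 0.
Proof. by rewrite pnatr_eq0 -lt0n. Qed.

Lemma omX m : om ^+ m = ee (2 * pi * m%:R / n%:R).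
Proof. by rewrite /om eeX; congr ee; ring. Qed.

Lemma om_angle k p : om ^+ (k * p) = ee (angle R n k p).
Proof. by rewrite omX /angle natrM mulrA. Qed.

Lemma omn : om ^+ n = 1.
Proof.
rewrite omX mulfK ?n_neq0 // -ee2pi; congr ee. lra.
Qed.



Lemma om_neq1 m : (0 < m < n)%N -> om ^+ m != 1.
Proof.
move=> /andP[m0 mn]; rewrite omX; apply: ee_neq1.
have n0 : (0 : R) < n%:R by rewrite ltr0n.
apply/andP; split.
  by rewrite divr_gt0 // mulr_gt0 ?ltr0n // mulr_gt0 // pi_gt0.
have hmn : (m%:R : R) < n%:R by rewrite ltr_nat.
have hpi := @pi_gt0 R.
rewrite ltr_pdivrMr //; nra.
Qed.

Lemma om_conjM m : (om ^+ m)^* * om ^+ m = 1.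
Proof. by rewrite rmorphXn /= -exprMn ee_conjM expr1n. Qed.

Lemma om_conj l p : (l <= n)%N -> (om ^+ (l * p))^* = om ^+ ((n - l) * p).
Proof.
move=> ln.
have h : om ^+ ((n - l) * p) * om ^+ (l * p) = 1.
  by rewrite -exprD -mulnDl subnK // exprM omn expr1n.
by rewrite -[LHS]mulr1 -h [X in _ * X]mulrC mulrA om_conjM mul1r.
Qed.

Lemma om_mod k : om ^+ (k %% n) = om ^+ k.
Proof. by rewrite expr_mod // omn. Qed.

Lemma sum_om m : \sum_(p < n) om ^+ (m * p) = if (n %| m)%N then n%:R else 0.
Proof.
case: ifP => hd.
  have -> : \sum_(p < n) om ^+ (m * p) = \sum_(p < n) (1 : C).
    apply: eq_bigr => p _; case/dvdnP: hd => q ->.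
    by rewrite -mulnA mulnC exprM exprM omn !expr1n.
  by rewrite sumr_const card_ord.
have hz : om ^+ m != 1.
  rewrite -om_mod; apply: om_neq1; rewrite ltn_pmod // andbT lt0n.
  by move: hd; rewrite /dvdn => ->.
have : (om ^+ m - 1) * \sum_(p < n) om ^+ (m * p) = 0.
  under eq_bigr do rewrite exprM.
  by rewrite -subrX1 -exprM mulnC exprM omn expr1n subrr.
by move/eqP; rewrite mulf_eq0 subr_eq0 (negbTE hz) /= => /eqP.
Qed.

Lemma omk_mod k a : om ^+ (k * (a %% n)) = om ^+ (k * a).
Proof. by rewrite !exprM; apply: expr_mod; rewrite -exprM mulnC exprM omn expr1n. Qed.

Definition chi k (u : ncplx R n) : C := \sum_(p < n) (u p)%:C * om ^+ (k * p).

Lemma sum_complex (I : Type) (r : seq I) (P : pred I) (f g : I -> R) :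
  \sum_(i <- r | P i) (f i +i* g i) = (\sum_(i <- r | P i) f i) +i* (\sum_(i <- r | P i) g i).
Proof. by apply: complex_eq; rewrite ?Re_sum ?Im_sum. Qed.

Lemma chiE k u : chi k u = vk u k +i* vtk u k.
Proof.
rewrite /chi /vk /vtk -sum_complex; apply: eq_bigr => p _.
by rewrite om_angle; apply: complex_eq; rewrite ?ReM ?ImM /= ; ring.
Qed.

Lemma chi_add k u v : chi k (ncadd u v) = chi k u + chi k v.
Proof. by rewrite /chi -big_split; apply: eq_bigr => p _; rewrite /ncadd rmorphD mulrDl. Qed.

Lemma chi_scale k a u : chi k (ncscale a u) = a%:C * chi k u.
Proof. by rewrite /chi mulr_sumr; apply: eq_bigr => p _; rewrite /ncscale rmorphM mulrA. Qed.

Lemma chi_zero k : chi k (@nczero R n) = 0.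
Proof. by rewrite /chi big1 // => p _; rewrite /nczero mul0r. Qed.

Lemma chi_sum k (I : Type) (r : seq I) (F : I -> ncplx R n) :
  chi k (ncsum r F) = \sum_(i <- r) chi k (F i).
Proof.
elim: r => [|a r IH]; first by rewrite big_nil chi_zero.
by rewrite big_cons /= chi_add IH.
Qed.

Lemma chi_one k : chi k (@ncone R n) = 1.
Proof.
rewrite /chi (bigD1 (Ordinal n_gt0)) //= big1 ?addr0.
  by rewrite /ncone /= muln0 expr0 mul1r.
move=> p hp; rewrite /ncone; case: eqP => [h|_]; last by rewrite mul0r.
by exfalso; move/eqP: hp; apply; apply: val_inj.
Qed.

Lemma chi_mul k u v : chi k (ncmul u v) = chi k u * chi k v.
Proof.
rewrite /chi /ncmul mulr_suml.
have e : forall m : 'I_n, ((\sum_(j < n) \sum_(l < n | ((j + l) %% n)%N == val m) u j * v l)%:C * om ^+ (k * m))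
   = \sum_(j < n) \sum_(l < n | ((j + l) %% n)%N == val m) ((u j)%:C * om ^+ (k * j)) * ((v l)%:C * om ^+ (k * l)).
  move=> m; rewrite rmorph_sum mulr_suml; apply: eq_bigr => j _.
  rewrite rmorph_sum mulr_suml; apply: eq_bigr => l /eqP hl.
  rewrite -hl omk_mod mulnDr exprD rmorphM; ring.
rewrite (eq_bigr _ (fun m _ => e m)) exchange_big /=; apply: eq_bigr => j _.
rewrite mulr_sumr (exchange_big_dep xpredT) //=; apply: eq_bigr => l _.
have hlt : ((j + l) %% n < n)%N by rewrite ltn_pmod.
rewrite (big_pred1 (Ordinal hlt)) // => m /=; rewrite eq_sym; apply/eqP/eqP => [h|->] //; apply: val_inj.

Qed.

Lemma chi_pow k w j : chi k (ncpow w j) = chi k w ^+ j.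
Proof.
elim: j => [|j IH]; first by rewrite expr0 /ncpow /= chi_one.
by rewrite /ncpow iterS -/(ncpow w j) chi_mul IH exprS.
Qed.


Lemma chi_series k w N :
  chi k (fun p => \sum_(j < N) ncpow w j p / (j`!)%:R) = Tg (chi k w) N.
Proof.
rewrite /chi /Tg.
under eq_bigr do rewrite rmorph_sum mulr_suml.
rewrite exchange_big /=; apply: eq_bigr => j _.
rewrite -chi_pow /chi mulr_suml; apply: eq_bigr => p _.
rewrite rmorphM fmorphV /= rmorph_nat.
by rewrite -!mulrA [_^-1 * _]mulrC.
Qed.

Lemma dvd_aux q p : (q < n)%N -> (p < n)%N -> (n %| q + (n - p))%N = (q == p).
Proof.
move=> qn pn; have [->|hqp] := eqVneq q p; first by rewrite subnKC ?dvdnn // ltnW.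
apply: negbTE; case: (ltngtP q p) => h.
- rewrite gtnNdvd //; lia.
- have -> : (q + (n - p) = (q - p) + n)%N by lia.
  rewrite (dvdn_addl _ (dvdnn n)) gtnNdvd //; lia.
- by rewrite h eqxx in hqp.
Qed.

Lemma chi_inv u (p : 'I_n) :
  \sum_(k < n) chi k u * om ^+ (k * (n - p)) = (n%:R * u p)%:C.
Proof.
rewrite /chi; under eq_bigr do rewrite mulr_suml.
rewrite exchange_big /=.
have e : forall q : 'I_n, \sum_(k < n) (u q)%:C * om ^+ (k * q) * om ^+ (k * (n - p))
   = (u q)%:C * (if val q == val p then n%:R else 0).
  move=> q; rewrite -(dvd_aux (ltn_ord q) (ltn_ord p)) -sum_om mulr_sumr.
  by apply: eq_bigr => k _; rewrite -mulrA -exprD -mulnDr mulnC.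
rewrite (eq_bigr _ (fun q _ => e q)) (bigD1 p) //= eqxx big1 ?addr0.
  by rewrite rmorphM rmorph_nat mulrC.
by move=> q hq; rewrite ifF ?mulr0 //; apply/negbTE.
Qed.

Lemma chi_inj (x y : ncplx R n) : (forall k, (k < n)%N -> chi k x = chi k y) -> x = y.
Proof.
move=> h; apply/funext => p.
have : (n%:R * x p)%:C = (n%:R * y p)%:C :> C.
  rewrite -!chi_inv; apply: eq_bigr => k _; by rewrite h.
move/(congr1 (@complex.Re R)) => /= /mulfI; apply; exact: n_neq0.
Qed.

Lemma chiN k u : (k <= n)%N -> chi (n - k) u = (chi k u)^*.
Proof.
move=> kn; rewrite /chi rmorph_sum; apply: eq_bigr => p _.
rewrite rmorphM; congr (_ * _); first by apply: complex_eq; rewrite /= ?oppr0.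
by rewrite -om_conj.
Qed.

End DFT.

Lemma tri_sum (V : zmodType) (F : nat -> nat -> V) N :
  \sum_(m < N) \sum_(j < m.+1) F j (m - j)%N = \sum_(j < N) \sum_(k < N | (j + k < N)%N) F j k.
Proof.
have e1 : forall m : 'I_N, \sum_(j < m.+1) F j (m - j)%N = \sum_(j < N | true && (j < m.+1)%N) F j (m - j)%N.
  by move=> m; rewrite (big_ord_widen_cond N xpredT (fun j => F j (m - j)%N)).
rewrite (eq_bigr _ (fun m _ => e1 m)) (exchange_big_dep xpredT) //=.
apply: eq_bigr => j _.
rewrite -(@big_geq_mkord _ _ _ j N xpredT (fun m => F j (m - j)%N)).
rewrite -{1}(add0n j) big_addn big_mkord.
rewrite (big_ord_widen N (fun i => F j (i + j - j)%N)) ?leq_subr //.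
apply: eq_big => i; first by rewrite /= ltn_subRL.
by move=> _; rewrite addnK.
Qed.

Definition Dg (K : fieldType) (x y : K) (N : nat) : K :=
  \sum_(j < N) \sum_(k < N | (N <= j + k)%N) x ^+ j * y ^+ k / ((j`!)%:R * (k`!)%:R).

Lemma TgD (K : numFieldType) (x y : K) N : Tg x N * Tg y N - Tg (x + y) N = Dg x y N.
Proof.
have fn0 : forall m, ((m`!)%:R : K) != 0 by move=> m; rewrite pnatr_eq0 -lt0n fact_gt0.
pose F0 := fun j k : nat => x ^+ j * y ^+ k / ((j`!)%:R * (k`!)%:R) : K.
have e1 : Tg (x + y) N = \sum_(j < N) \sum_(k < N | (j + k < N)%N) F0 j k.
  rewrite -tri_sum /Tg /F0; apply: eq_bigr => m _; rewrite addrC exprDn mulr_suml; apply: eq_bigr => i _.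
  have hi : (i <= m)%N by rewrite -ltnS.
  have hb : ('C(m, i)%:R : K) != 0 by rewrite pnatr_eq0 -lt0n bin_gt0.
  rewrite -(bin_fact hi) !natrM -mulr_natr; move: (fn0 i) (fn0 (m - i)%N) hb; set a := (i`!)%:R; set b := ((m - i)`!)%:R; set c := 'C(m, i)%:R => ha hb' hc.
  by field; rewrite ha hb' hc.
rewrite e1 /F0 /Tg mulr_suml /Dg -sumrB; apply: eq_bigr => j _.
rewrite mulr_sumr (eq_bigr (fun k : 'I_N => x ^+ j * y ^+ k / ((j`!)%:R * (k`!)%:R))); last first.
  by move=> k _; rewrite invfM; ring.
rewrite (bigID (fun k : 'I_N => (j + k < N)%N)) /= addrC addrK.
by apply: eq_bigl => k; rewrite -leqNgt.
Qed.

Lemma Dg_norm (K : numFieldType) (x y : K) N : `|Dg x y N| <= Dg `|x| `|y| N.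
Proof.
apply: (le_trans (ler_norm_sum _ _ _)); apply: ler_sum => j _.
apply: (le_trans (ler_norm_sum _ _ _)); apply: ler_sum => k _.
by rewrite normrM normfV !normrM !normrX !normr_nat.
Qed.

Section CExp.
Variable R : realType.
Local Notation C := R[i].

Definition cexp (z : C) : C := (expR (complex.Re z))%:C * ee (complex.Im z).

Lemma ReN (x : C) : complex.Re (- x) = - complex.Re x. Proof. by case: x. Qed.
Lemma ImN (x : C) : complex.Im (- x) = - complex.Im x. Proof. by case: x. Qed.
Lemma ReCM (r : R) (w : C) : complex.Re (r%:C * w) = r * complex.Re w.
Proof. by rewrite ReM /= mul0r subr0. Qed.
Lemma ImCM (r : R) (w : C) : complex.Im (r%:C * w) = r * complex.Im w.
Proof. by rewrite ImM /= mul0r addr0. Qed.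

Lemma Tg_real (a : R) N : Tg (a%:C) N = (Tg a N)%:C.
Proof.
rewrite /Tg rmorph_sum; apply: eq_bigr => j _.
by rewrite rmorphM rmorphXn fmorphV rmorph_nat.
Qed.

Lemma Dg_real (a b : R) N : Dg a%:C b%:C N = (Dg a b N)%:C.
Proof.
rewrite /Dg rmorph_sum; apply: eq_bigr => j _.
rewrite rmorph_sum; apply: eq_bigr => k _.
by rewrite !rmorphM !rmorphXn fmorphV rmorphM !rmorph_nat.
Qed.

Lemma norm_realC (a : R) : `|a%:C| = `|a|%:C.
Proof. by rewrite normc_def /= expr0n addr0 sqrtr_sqr. Qed.

Lemma norm_i : `|'i%C : C| = 1.
Proof. by rewrite complexiE normCi. Qed.

Lemma norm_iC (b : R) : `|b%:C * 'i%C| = `|b|%:C.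
Proof. by rewrite normrM norm_i mulr1 norm_realC. Qed.

Lemma ReDbound (a b : R) N : `|complex.Re (Dg a%:C (b%:C * 'i%C) N)| <= Dg `|a| `|b| N.
Proof.
rewrite -lecR (le_trans (normc_ge_Re _)) // (le_trans (Dg_norm _ _ _)) //.
by rewrite norm_realC norm_iC Dg_real.
Qed.

Lemma ImDbound (a b : R) N : `|complex.Im (Dg a%:C (b%:C * 'i%C) N)| <= Dg `|a| `|b| N.
Proof.
rewrite -normrN -ReiNIm -lecR (le_trans (normc_ge_Re _)) //.
rewrite normrM norm_i mulr1 (le_trans (Dg_norm _ _ _)) //.
by rewrite norm_realC norm_iC Dg_real.
Qed.

Lemma i_pow j : ('i%C : C) ^+ j = (if odd j then 'i%C else 1) * ((-1) ^+ j./2 : R)%:C.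
Proof.
rewrite -{1}(odd_double_half j) exprD -muln2 mulnC exprM sqr_i rmorphXn rmorphN1.
by case: (odd j); rewrite ?expr1 ?expr0.
Qed.

Lemma half_pred_odd j : odd j -> j.-1./2 = j./2.
Proof.
move=> hj; rewrite -{1}(odd_double_half j) hj add1n /=.
by rewrite doubleK.
Qed.

Lemma ipow_term (b : R) j : (b%:C * 'i%C) ^+ j / (j`!)%:R =
  (b ^+ j / (j`!)%:R * (-1) ^+ j./2)%:C * (if odd j then 'i%C else 1).
Proof.
rewrite exprMn i_pow !rmorphM fmorphV !rmorphXn rmorph_nat /=; set t := (if _ then _ else _); ring.
Qed.

Lemma Re_Tg_i (b : R) N : complex.Re (Tg (b%:C * 'i%C) N) = series (cos_coeff b) N.
Proof.
rewrite /Tg Re_sum /series /= big_mkord; apply: eq_bigr => j _.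
rewrite ipow_term ReCM /cos_coeff /=.
by case: (odd j) => /=; rewrite -?exprnP; ring.
Qed.

Lemma Im_Tg_i (b : R) N : complex.Im (Tg (b%:C * 'i%C) N) = series (sin_coeff b) N.
Proof.
rewrite /Tg Im_sum /series /= big_mkord; apply: eq_bigr => j _.
rewrite ipow_term ImCM /sin_coeff /=.
case hj: (odd j) => /=; first last. by rewrite -?exprnP; ring.
by rewrite half_pred_odd // -?exprnP; ring.
Qed.

Lemma cvg_Tg_real (a : R) : (fun N => Tg a N) @ \oo --> expR a.
Proof.
have -> : (fun N => Tg a N) = series (exp_coeff a).
  by apply/funext => N; rewrite /series /= big_mkord.
exact: is_cvg_series_exp_coeff.
Qed.

Lemma cvg_cos (b : R) : series (cos_coeff b) @ \oo --> cos b.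
Proof. rewrite unlock; exact: is_cvg_series_cos_coeff. Qed.

Lemma cvg_sin (b : R) : series (sin_coeff b) @ \oo --> sin b.
Proof. rewrite unlock; exact: is_cvg_series_sin_coeff. Qed.

End CExp.

Section CExp2.
Variable R : realType.
Local Notation C := R[i].

Lemma cvgB0 (a b : R) : (fun N => Dg `|a| `|b| N) @ \oo --> 0.
Proof.
have e : (fun N => Dg `|a| `|b| N) = (fun N => Tg `|a| N * Tg `|b| N - Tg (`|a| + `|b|) N).
  by apply/funext => N; rewrite TgD.
rewrite e; have -> : (0:R) = expR `|a| * expR `|b| - expR (`|a| + `|b|) by rewrite expRD subrr.
apply: cvgB; first apply: cvgM; exact: cvg_Tg_real.
Qed.

Lemma squeeze0 (f g : nat -> R) : (forall N, `|f N| <= g N) -> g @ \oo --> 0 -> f @ \oo --> 0.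
Proof.
move=> hb hg.
apply: (@squeeze_cvgr _ _ _ _ (fun N => - g N) g).
- by apply: nearW => N; rewrite -ler_norml.
- by rewrite -oppr0; apply: cvgN.
- exact: hg.
Qed.

Lemma Tg_cvg (z : C) :
  (fun N => complex.Re (Tg z N)) @ \oo --> complex.Re (cexp z) /\
  (fun N => complex.Im (Tg z N)) @ \oo --> complex.Im (cexp z).
Proof.
case: z => a b.
have hz : a +i* b = a%:C + b%:C * 'i%C by apply: complex_eq; rewrite ?ReD ?ImD ?ReCM ?ImCM /=; ring.
have eT : forall N, Tg (a +i* b) N = (Tg a N)%:C * Tg (b%:C * 'i%C) N - Dg a%:C (b%:C * 'i%C) N.
  by move=> N; rewrite hz -TgD Tg_real; ring.
split.
- have -> : (fun N => complex.Re (Tg (a +i* b) N)) =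
     (fun N => Tg a N * series (cos_coeff b) N - complex.Re (Dg a%:C (b%:C * 'i%C) N)).
    by apply/funext => N; rewrite eT ReD ReN ReCM Re_Tg_i.
  rewrite (_ : complex.Re (cexp (a +i* b)) = expR a * cos b - 0); last by rewrite /cexp /=; ring.
  apply: cvgB; first (apply: cvgM; [exact: cvg_Tg_real | exact: cvg_cos]).
  apply: (squeeze0 _ (cvgB0 a b)) => N; exact: ReDbound.
- have -> : (fun N => complex.Im (Tg (a +i* b) N)) =
     (fun N => Tg a N * series (sin_coeff b) N - complex.Im (Dg a%:C (b%:C * 'i%C) N)).
    by apply/funext => N; rewrite eT ImD ImN ImCM Im_Tg_i.
  rewrite (_ : complex.Im (cexp (a +i* b)) = expR a * sin b - 0); last by rewrite /cexp /=; ring.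
  apply: cvgB; first (apply: cvgM; [exact: cvg_Tg_real | exact: cvg_sin]).
  apply: (squeeze0 _ (cvgB0 a b)) => N; exact: ImDbound.
Qed.

End CExp2.

Lemma cvg_sum_ord (R : realType) (m : nat) (f : 'I_m -> nat -> R) (l : 'I_m -> R) :
  (forall k, f k @ \oo --> l k) -> (fun N => \sum_(k < m) f k N) @ \oo --> \sum_(k < m) l k.
Proof.
elim: m f l => [|m IH] f l h.
  have -> : (fun N => \sum_(k < 0) f k N) = (fun _ => 0) by apply/funext => N; rewrite big_ord0.
  rewrite big_ord0; exact: cvg_cst.
have -> : (fun N => \sum_(k < m.+1) f k N) =
   (fun N => \sum_(k < m) f (widen_ord (leqnSn m) k) N + f ord_max N).
  by apply/funext => N; rewrite big_ord_recr.
rewrite big_ord_recr; apply: cvgD; last exact: h.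
by apply: (IH (fun k => f (widen_ord (leqnSn m) k))) => k; exact: h.
Qed.

Lemma lim_uniq (R : realType) (f : nat -> R) (a b : R) : f @ \oo --> a -> f @ \oo --> b -> a = b.
Proof. by move=> h1 h2; rewrite -(cvg_lim _ h1) // (cvg_lim _ h2). Qed.

Section Main.
Variable R : realType.
Variable n : nat.
Hypothesis n_gt0 : (0 < n)%N.
Local Notation C := R[i].

Lemma exp_exists (w : ncplx R n) :
  exists E, ncexp_is w E /\ forall k, chi k E = cexp (chi k w).
Proof.
pose S N := fun p : 'I_n => \sum_(j < N) ncpow w j p / (j`!)%:R.
pose c (k : 'I_n) (p : 'I_n) := om R n ^+ (k * (n - p)).
pose L (k : 'I_n) := cexp (chi k w).
pose E := fun p : 'I_n => complex.Re (\sum_(k < n) L k * c k p) / n%:R.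
have hS : forall N p, S N p = complex.Re (\sum_(k < n) Tg (chi k w) N * c k p) / n%:R.
  move=> N p; rewrite /c.
  rewrite (eq_bigr (fun k : 'I_n => chi k (S N) * om R n ^+ (k * (n - p)))); last first.
    by move=> k _; rewrite /S chi_series.
  by rewrite chi_inv //= mulrC mulKf // n_neq0.
have conv : forall p, (fun N => S N p) @ \oo --> E p.
  move=> p; rewrite (funext (hS ^~ p)) /E; apply: cvgMr_tmp.
  have -> : (fun N => complex.Re (\sum_(k < n) Tg (chi k w) N * c k p)) =
     (fun N => \sum_(k < n) (complex.Re (Tg (chi k w) N) * complex.Re (c k p)
                             - complex.Im (Tg (chi k w) N) * complex.Im (c k p))).
    by apply/funext => N; rewrite Re_sum; apply: eq_bigr => k _; rewrite ReM.
  rewrite Re_sum; under eq_bigr do rewrite ReM.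
  apply: cvg_sum_ord => k; apply: cvgB; apply: cvgMr_tmp.
    exact: (Tg_cvg _).1.
  exact: (Tg_cvg _).2.
exists E; split; first exact: conv.
move=> k.
have hRe : forall N, complex.Re (chi k (S N)) = \sum_(p < n) S N p * complex.Re (om R n ^+ (k * p)).
  by move=> N; rewrite /chi Re_sum; apply: eq_bigr => p _; rewrite ReCM.
have hIm : forall N, complex.Im (chi k (S N)) = \sum_(p < n) S N p * complex.Im (om R n ^+ (k * p)).
  by move=> N; rewrite /chi Im_sum; apply: eq_bigr => p _; rewrite ImCM.
apply: complex_eq.
- apply: (@lim_uniq _ (fun N => complex.Re (chi k (S N)))).
  + rewrite (funext hRe) /chi Re_sum; under eq_bigr do rewrite ReCM.
    by apply: cvg_sum_ord => p; apply: cvgMr_tmp; exact: conv.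
  + have -> : (fun N => complex.Re (chi k (S N))) = (fun N => complex.Re (Tg (chi k w) N)).
      by apply/funext => N; rewrite /S chi_series.
    exact: (Tg_cvg _).1.
- apply: (@lim_uniq _ (fun N => complex.Im (chi k (S N)))).
  + rewrite (funext hIm) /chi Im_sum; under eq_bigr do rewrite ImCM.
    by apply: cvg_sum_ord => p; apply: cvgMr_tmp; exact: conv.
  + have -> : (fun N => complex.Im (chi k (S N))) = (fun N => complex.Im (Tg (chi k w) N)).
      by apply/funext => N; rewrite /S chi_series.
    exact: (Tg_cvg _).2.
Qed.

End Main.

Lemma half_pred n : (n.-1)./2 = if odd n then n./2 else (n./2).-1.
Proof.
case: n => [|m] //=; rewrite uphalf_half.
by case: (odd m).
Qed.

Lemma sum_iota_eq (K : ringType) (a m k : nat) (G : nat -> K) :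
  \sum_(l <- iota a m) (k == l)%:R * G l = (k \in iota a m)%:R * G k.
Proof.
elim: m a => [|m IH] a; first by rewrite big_nil in_nil mul0r.
rewrite /= big_cons IH in_cons.
case: eqP => [->|hk] /=.
  by rewrite mem_iota ltnn /= mul0r addr0 mul1r.
by rewrite mul0r add0r.
Qed.

Section Basis.
Variable R : realType.
Variable n : nat.
Hypothesis n_gt0 : (0 < n)%N.
Local Notation C := R[i].
Local Notation om := (om R n).

Lemma dvd_small k : (k < n)%N -> (n %| k)%N = (k == 0%N).
Proof.
move=> kn; case: eqP => [->|h]; first exact: dvdn0.
by apply: negbTE; rewrite gtnNdvd // lt0n; apply/eqP.
Qed.

Lemma invnC : ((n%:R : R)^-1)%:C * n%:R = 1 :> C.
Proof. by rewrite fmorphV rmorph_nat /= mulVf // pnatr_eq0 -lt0n. Qed.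

Lemma chi_eplus k : (k < n)%N -> chi k (@eplus R n) = (k == 0%N)%:R.
Proof.
move=> kn; rewrite /chi /eplus.
under eq_bigr do rewrite div1r.
rewrite -mulr_sumr (sum_om R n_gt0) dvd_small //.
by case: eqP => _; [apply: invnC | rewrite mulr0].
Qed.

Lemma om_half : ~~ odd n -> om ^+ (n./2) = -1.
Proof.
move=> hn.
have h2 : (n./2 * 2 = n)%N by rewrite muln2 -{2}(odd_double_half n) (negbTE hn).
have : (om ^+ n./2) ^+ 2 == 1 by rewrite -exprM h2 (omn R n_gt0).
have hneq : om ^+ n./2 != 1.
  by apply: (om_neq1 R n_gt0); apply/andP; split; lia.
by rewrite sqrf_eq1 (negbTE hneq) /= => /eqP.
Qed.

Lemma chi_eminus k : ~~ odd n -> (k < n)%N -> chi k (@eminus R n) = (k == n./2)%:R.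
Proof.
move=> hn kn.
have h2 : (n./2 + n./2 = n)%N by rewrite addnn -{2}(odd_double_half n) (negbTE hn).
rewrite /chi /eminus.
have e : forall p : 'I_n, ((-1) ^+ p / n%:R)%:C * om ^+ (k * p) = ((n%:R : R)^-1)%:C * om ^+ ((k + (n - n./2)) * p).
  move=> p; rewrite rmorphM rmorphXn rmorphN1 -(om_half hn) -exprM.
  have -> : (n - n./2 = n./2)%N by lia.
  by rewrite mulnDl exprD mulnC; ring.
rewrite (eq_bigr _ (fun p _ => e p)) -mulr_sumr (sum_om R n_gt0) (dvd_aux n_gt0) //; last lia.
by case: eqP => _; rewrite ?mulr0 // invnC.
Qed.

Lemma om_cos l p : (l <= n)%N ->
  (cos (angle R n l p))%:C = (om ^+ (l * p) + om ^+ ((n - l) * p)) / 2.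
Proof.
move=> ln; rewrite -(om_conj R n_gt0 p ln) om_angle -ReJ_add //.
Qed.

Lemma om_sin l p : (l <= n)%N ->
  (sin (angle R n l p))%:C = (om ^+ ((n - l) * p) - om ^+ (l * p)) / 2 * 'i%C.
Proof.
move=> ln; rewrite -(om_conj R n_gt0 p ln) om_angle -ImJ_sub //.
Qed.

Lemma RCM (a b : R) : (a * b)%:C = a%:C * b%:C :> C.
Proof. by apply: complex_eq; rewrite ?ReM ?ImM /=; ring. Qed.

Lemma RC2 : (2 : R)%:C = 2 :> C.
Proof. by apply: complex_eq => /=; ring. Qed.

Lemma two_neq0 : (2 : C) != 0.
Proof. by rewrite pnatr_eq0. Qed.

Lemma if_sum (b1 b2 : bool) :
  ((n%:R : R)^-1)%:C * ((if b1 then n%:R else 0) + (if b2 then n%:R else 0)) = b1%:R + b2%:R :> C.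
Proof.
rewrite mulrDr; case: b1; case: b2; rewrite ?mulr0 ?invnC ?addr0 ?add0r //.
Qed.

Lemma chi_ek k l : (l <= n)%N ->
  chi k (@ek R n l) = ((n %| l + k)%N)%:R + ((n %| k + (n - l))%N)%:R.
Proof.
move=> ln; rewrite /chi /ek.
have e : forall p : 'I_n, (2 / n%:R * cos (angle R n l p))%:C * om ^+ (k * p) =
   ((n%:R : R)^-1)%:C * (om ^+ ((l + k) * p) + om ^+ ((k + (n - l)) * p)).
  move=> p; rewrite !mulnDl !exprD !RCM om_cos // RC2.
  have h2 := two_neq0.
  by field; rewrite pnatr_eq0 -lt0n.
rewrite (eq_bigr _ (fun p _ => e p)) -mulr_sumr big_split /= !(sum_om R n_gt0).
exact: if_sum.
Qed.

Lemma chi_etk k l : (l <= n)%N ->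
  chi k (@etk R n l) = (((n %| k + (n - l))%N)%:R - ((n %| l + k)%N)%:R) * 'i%C.
Proof.
move=> ln; rewrite /chi /etk.
have e : forall p : 'I_n, (2 / n%:R * sin (angle R n l p))%:C * om ^+ (k * p) =
   ((n%:R : R)^-1)%:C * (om ^+ ((k + (n - l)) * p) - om ^+ ((l + k) * p)) * 'i%C.
  move=> p; rewrite !mulnDl !exprD !RCM om_sin // RC2.
  have h2 := two_neq0.
  by field; rewrite pnatr_eq0 -lt0n.
rewrite (eq_bigr _ (fun p _ => e p)) -mulr_suml -mulr_sumr sumrB /= !(sum_om R n_gt0).
rewrite mulrBr; case: (n %| _)%N; case: (n %| _)%N; rewrite ?mulr0 ?invnC ?subr0 ?sub0r //.
Qed.

End Basis.

Section Final.
Variable R : realType.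
Variable n : nat.
Hypothesis n_ge2 : (2 <= n)%N.
Local Notation C := R[i].

Lemma n_gt0' : (0 < n)%N. Proof. by apply: leq_trans n_ge2. Qed.

Lemma nhalf : (n./2 + n./2 + odd n = n)%N.
Proof. by rewrite addnn addnC odd_double_half. Qed.

Lemma mem_krange k : (k \in krange n) = (1 <= k <= (n.-1)./2)%N.
Proof. by rewrite /krange mem_iota add1n ltnS. Qed.

Lemma chi_inj_half (x y : ncplx R n) :
  (forall k, (k < n)%N -> (k <= n./2)%N -> chi k x = chi k y) -> x = y.
Proof.
move=> h; apply: (chi_inj n_gt0') => k kn.
case: (leqP k n./2) => hk; first exact: h.
have hn := nhalf.
have h1 : (n - k < n)%N by lia.
have h2 : (n - k <= n./2)%N by case: (odd n) hn => /= hn; lia.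
have E := h _ h1 h2.
have : chi (n - (n - k)) x = chi (n - (n - k)) y by rewrite (@chiN R n n_gt0' (n - k) x (leq_subr _ _)) (@chiN R n n_gt0' (n - k) y (leq_subr _ _)) E.
by rewrite subKn // ltnW.
Qed.

Lemma sumRC (I : Type) (r : seq I) (f : I -> R) : (\sum_(i <- r) f i)%:C = \sum_(i <- r) (f i)%:C :> C.
Proof. by apply: complex_eq; rewrite ?Re_sum ?Im_sum /= ?big1_eq. Qed.

Lemma RCN1X p : (((-1) ^+ p : R))%:C = (-1) ^+ p :> C.
Proof.
elim: p => [|p IH]; first by apply: complex_eq.
by rewrite !exprS RCM IH; congr (_ * _); apply: complex_eq => //=; rewrite oppr0.
Qed.

Lemma uA (u : ncplx R n) : chi 0 u = (vplus u)%:C.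
Proof. by rewrite /chi /vplus sumRC; apply: eq_bigr => p _; rewrite mul0n expr0 mulr1. Qed.

Lemma uC (u : ncplx R n) : ~~ odd n -> chi n./2 u = (vminus u)%:C.
Proof.
move=> ho; rewrite /chi /vminus sumRC; apply: eq_bigr => p _.
by rewrite exprM (om_half R n_gt0') // RCM RCN1X mulrC.
Qed.

Lemma uB (u : ncplx R n) (phi : nat -> R) k : 0 < rhok u k ->
  cos (phi k) = vk u k / rhok u k -> sin (phi k) = vtk u k / rhok u k ->
  chi k u = (rhok u k)%:C * ee (phi k).
Proof.
move=> hr hc hs; rewrite chiE; apply: complex_eq; rewrite ?ReCM ?ImCM /= ?hc ?hs.
  by rewrite mulrC divfK // gt_eqF.
by rewrite mulrC divfK // gt_eqF.
Qed.

Lemma cexp_real (a : R) : cexp (a%:C) = (expR a)%:C.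
Proof. by rewrite /cexp /= ee0 mulr1. Qed.

Lemma cexp_ri (a b : R) : cexp (a%:C + b%:C * 'i%C) = (expR a)%:C * ee b.
Proof.
rewrite /cexp ReD ImD ReCM ImCM /= !(mulr0, mulr1, addr0, add0r) //.
Qed.

Lemma cexp_i (b : R) : cexp (b%:C * 'i%C) = ee b.
Proof.
rewrite /cexp ReCM ImCM /= !(mulr0, mulr1, addr0, add0r) expR0 mul1r //.
Qed.

Lemma cexp0 : cexp (0 : C) = 1.
Proof. by rewrite /cexp /= expR0 ee0 mulr1. Qed.

End Final.

Section Final2.
Variable R : realType.
Variable n : nat.
Hypothesis n_ge2 : (2 <= n)%N.
Local Notation C := R[i].
Local Notation n_gt0 := (n_gt0' n_ge2).

Lemma hp : (n.-1)./2 = if odd n then n./2 else (n./2).-1.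
Proof. exact: half_pred. Qed.

Lemma dvd_lk l k : l \in krange n -> (k <= n./2)%N -> (n %| l + k)%N = false.
Proof.
rewrite (mem_krange n) hp => /andP[l1 l2] kh; apply: negbTE.
have hn := nhalf n.
rewrite gtnNdvd //; first lia.
by case: (odd n) l2 hn => /= l2 hn; lia.
Qed.

Lemma kr_lt l : l \in krange n -> (l < n)%N.
Proof.
rewrite (mem_krange n) hp => /andP[l1 l2]; have hn := nhalf n.
by case: (odd n) l2 hn => /= l2 hn; lia.
Qed.

Lemma chi_ks (G : nat -> C) (F : nat -> ncplx R n) k :
  (forall l, l \in krange n -> chi k (F l) = (k == l)%:R * G l) ->
  chi k (ncsum (krange n) F) = (k \in krange n)%:R * G k.
Proof. by move=> h; rewrite chi_sum (eq_big_seq _ h) /krange sum_iota_eq. Qed.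

Lemma chi_log (u : ncplx R n) phi k : (k < n)%N -> (k <= n./2)%N ->
  chi k (log_exponent u phi) =
    (ln (vplus u))%:C * (k == 0%N)%:R
    + ((if odd n then 0 else (ln (vminus u))%:C * (k == n./2)%:R)
    + (k \in krange n)%:R * ((ln (rhok u k))%:C + (phi k)%:C * 'i%C)).
Proof.
move=> kn kh; rewrite /log_exponent !chi_add chi_scale (chi_eplus R n_gt0) //.
congr (_ + (_ + _)).
  by case ho: (odd n); [exact: chi_zero | rewrite chi_scale (chi_eminus R n_gt0) ?ho].
apply: (@chi_ks (fun l => (ln (rhok u l))%:C + (phi l)%:C * 'i%C)) => l hl.
have ln' := kr_lt hl.
rewrite /= chi_add (chi_scale k (ln (rhok u l))) (chi_scale k (phi l)) (chi_ek R n_gt0) ?(chi_etk R n_gt0) ?(ltnW ln') //.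
rewrite (dvd_lk hl kh) (dvd_aux n_gt0) //=; ring.
Qed.

Lemma chi_mod (u : ncplx R n) k : (k < n)%N -> (k <= n./2)%N ->
  chi k (modulus_part u) =
    (vplus u)%:C * (k == 0%N)%:R
    + ((if odd n then 0 else (vminus u)%:C * (k == n./2)%:R)
    + (k \in krange n)%:R * (rhok u k)%:C).
Proof.
move=> kn kh; rewrite /modulus_part !chi_add chi_scale (chi_eplus R n_gt0) //.
congr (_ + (_ + _)).
  by case ho: (odd n); [exact: chi_zero | rewrite chi_scale (chi_eminus R n_gt0) ?ho].
apply: (@chi_ks (fun l => (rhok u l)%:C)) => l hl.
have ln' := kr_lt hl.
rewrite /= (chi_scale k (rhok u l)) (chi_ek R n_gt0) ?(ltnW ln') //.
rewrite (dvd_lk hl kh) (dvd_aux n_gt0) //=; ring.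
Qed.

Lemma chi_ang (phi : nat -> R) k : (k < n)%N -> (k <= n./2)%N ->
  chi k (angle_exponent (n:=n) phi) = (k \in krange n)%:R * ((phi k)%:C * 'i%C).
Proof.
move=> kn kh; rewrite /angle_exponent.
apply: (@chi_ks (fun l => (phi l)%:C * 'i%C)) => l hl.
have ln' := kr_lt hl.
rewrite /= (chi_scale k (phi l)) (chi_etk R n_gt0) ?(ltnW ln') //.
rewrite (dvd_lk hl kh) (dvd_aux n_gt0) //=; ring.
Qed.

Lemma classify k : (k < n)%N -> (k <= n./2)%N ->
  [\/ k = 0%N, k \in krange n | ~~ odd n /\ k = n./2].
Proof.
move=> kn kh; rewrite (mem_krange n) hp; have hn := nhalf n.
case: (posnP k) => [->|k0]; first by constructor 1.
case ho: (odd n) hn => /= hn.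
  by constructor 2; try (apply/andP; split); lia.
case: (leqP k (n./2).-1) => h.
  by constructor 2; try (apply/andP; split); lia.
by constructor 3; split => //; lia.
Qed.

End Final2.
Unset Implicit Arguments.

Theorem mainTheorem9 (R : realType) (n : nat) (hn : (2 <= n)%N)
  (u : ncplx R n) (phi : nat -> R)
  (hvp : 0 < vplus u)
  (hvm : ~~ odd n -> 0 < vminus u)
  (hrho : forall k, (1 <= k <= (n.-1)./2)%N -> 0 < rhok u k)
  (hphi : forall k, (1 <= k <= (n.-1)./2)%N ->
     [/\ 0 <= phi k, phi k < 2 * pi,
         cos (phi k) = vk u k / rhok u k & sin (phi k) = vtk u k / rhok u k]) :
  ncexp_is (log_exponent u phi) u /\
  exists E, ncexp_is (angle_exponent (n:=n) phi) E /\ u = ncmul (modulus_part u) E.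
Proof.
have n_gt0 := n_gt0' hn.
have hB : forall k, k \in krange n -> chi k u = (rhok u k)%:C * ee (phi k).
  move=> k hk; move: (hk); rewrite (mem_krange n) => hk'.
  by case: (hphi k hk') => _ _ hc hs; exact: (uB (hrho k hk') hc hs).
have hnh := nhalf n.
have h0half : (0 == n./2) = false by apply/eqP; case: (odd n) hnh => /= hnh; lia.
have h0kr : (0 \in krange n) = false by rewrite mem_krange.
have hhalf0 : (n./2 == 0) = false by rewrite eq_sym.
have hkhalf : forall k, k \in krange n -> (if odd n then (0 : R[i]) else (k == n./2)%:R) = 0.
  move=> k; rewrite mem_krange half_pred; case: (odd n) hnh => //= hnh hk.
  have -> : (k == n./2) = false by apply/eqP; lia.
  by [].
have hk0 : forall k, k \in krange n -> (k == 0) = false.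
  by move=> k; rewrite mem_krange => /andP[h _]; apply/eqP; lia.
have hhalfkr : ~~ odd n -> (n./2 \in krange n) = false.
  by move=> ho; rewrite mem_krange half_pred (negbTE ho); apply/negbTE/negP => /andP[a b]; lia.
split.
- have [E [hE hchi]] := exp_exists n_gt0 (log_exponent u phi).
  suff e : u = E by rewrite -e in hE.
  apply: (chi_inj_half hn) => k kn kh; rewrite hchi (chi_log hn) //.
  case: (classify hn kn kh) => [->|hk|[ho ->]].
  + rewrite eqxx h0half h0kr !mul0r !mulr0 if_same !addr0 mulr1 cexp_real lnK ?uA //.
  + rewrite (hk0 _ hk) hk mulr0 add0r mul1r.
    have -> : (if odd n then 0 else (ln (vminus u))%:C * (k == n./2)%:R) = 0 :> R[i].
      by move: (hkhalf _ hk); case: (odd n) => // ->; rewrite mulr0.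
    by rewrite add0r cexp_ri lnK ?hB // posrE hrho // -mem_krange.
  + rewrite hhalf0 (hhalfkr ho) (negbTE ho) eqxx mulr0 mul0r add0r addr0 mulr1.
    by rewrite cexp_real lnK ?(uC hn) // posrE hvm.
- have [E [hE hchi]] := exp_exists n_gt0 (angle_exponent (n:=n) phi).
  exists E; split => //.
  apply: (chi_inj_half hn) => k kn kh.
  rewrite (chi_mul n_gt0) hchi (chi_mod hn) // (chi_ang hn) //.
  case: (classify hn kn kh) => [->|hk|[ho ->]].
  + rewrite eqxx h0half h0kr !mul0r !mulr0 if_same !addr0 mulr1 cexp0 mulr1.
    exact: uA.
  + rewrite (hk0 _ hk) hk mulr0 add0r !mul1r.
    have -> : (if odd n then 0 else (vminus u)%:C * (k == n./2)%:R) = 0 :> R[i].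
      by move: (hkhalf _ hk); case: (odd n) => // ->; rewrite mulr0.
    by rewrite add0r cexp_i hB.
  + rewrite hhalf0 (hhalfkr ho) (negbTE ho) eqxx !mulr0 !mul0r add0r addr0 mulr1 cexp0 mulr1.
    exact: (uC hn).
Qed.
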